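(* Let $X$ be a compact metric space with metric $d$ and let $f\colon X\to X$ be a continuous map. If $f$ has the contractive shadowing property, then $f$ has the h-shadowing property.
   Context: For $\delta>0$, a sequence $(x_i)_{i\ge0}$ in $X$ is a $\delta$-pseudo orbit of $f$ if $d(f(x_i),x_{i+1})\le\delta$ for all $i\ge0$; it is $\epsilon$-shadowed by $x\in X$ if $d(f^i(x),x_i)\le\epsilon$ for all $i\ge0$. For $L>0$, $f$ has the $L$-Lipschitz shadowing property if there is $\delta_0>0$ such that for every $0<\delta\le\delta_0$, every $\delta$-pseudo orbit of $f$ is $L\delta$-shadowed by some point of $X$. $f$ has the contractive shadowing property if it has the $L$-Lipschitz shadowing property for some $0<L<1$. A finite sequence $(x_i)_{i=0}^k$ ($k\ge1$) is a $\delta$-chain of $f$ if $d(f(x_i),x_{i+1})\le\delta$ for $0\le i\le k-1$. $f$ has the h-shadowing property if for every $\epsilon>0$ there is $\delta>0$ such that for every $\delta$-chain $(x_i)_{i=0}^k$ of $f$ there is $x\in X$ with $d(f^i(x),x_i)\le\epsilon$ for all $0\le i\le k-1$ and $f^k(x)=x_k$. *)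

(* Defs.v *)
From HB Require Import structures.
From mathcomp Require Import all_boot all_order all_algebra.
From mathcomp Require Import all_classical all_reals all_analysis.
Set Implicit Arguments. Unset Strict Implicit. Unset Printing Implicit Defensive.
Import Order.TTheory GRing.Theory Num.Theory.
Local Open Scope ring_scope.

Section Shadowing.
Context {R : realType} {X : metricType R}.

Local Notation d := (@mdist R X).

Definition pseudo_orbit (f : X -> X) (delta : R) (xs : nat -> X) : Prop :=
  forall i : nat, d (f (xs i)) (xs i.+1) <= delta.

Definition shadowed_by (f : X -> X) (eps : R) (xs : nat -> X) (x : X) : Prop :=
  forall i : nat, d (iter i f x) (xs i) <= eps.

Definition Lipschitz_shadowing (f : X -> X) (L : R) : Prop :=
  exists2 delta0 : R, 0 < delta0 &
    forall delta : R, 0 < delta -> delta <= delta0 ->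
      forall xs : nat -> X, pseudo_orbit f delta xs ->
        exists x : X, shadowed_by f (L * delta) xs x.

Definition contractive_shadowing (f : X -> X) : Prop :=
  exists L : R, [/\ 0 < L, L < 1 & Lipschitz_shadowing f L].

(* delta-chain (x_0, ..., x_k), k >= 1, represented by a sequence on [0, k] *)
Definition delta_chain (f : X -> X) (delta : R) (xs : nat -> X) (k : nat) : Prop :=
  (1 <= k)%N /\ forall i : nat, (i < k)%N -> d (f (xs i)) (xs i.+1) <= delta.

Definition h_shadowing (f : X -> X) : Prop :=
  forall eps : R, 0 < eps -> exists2 delta : R, 0 < delta &
    forall (xs : nat -> X) (k : nat), delta_chain f delta xs k ->
      exists x : X, (forall i : nat, (i < k)%N -> d (iter i f x) (xs i) <= eps)
                    /\ iter k f x = xs k.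

End Shadowing.

(* Main.v *)
Require Import Defs.
From HB Require Import structures.
From mathcomp Require Import all_boot all_order all_algebra.
From mathcomp Require Import all_classical all_reals all_analysis.
From mathcomp Require Import lra zify.
Import Order.TTheory GRing.Theory Num.Theory numFieldTopology.Exports numFieldNormedType.Exports.
Local Open Scope ring_scope.
Local Open Scope classical_set_scope.

Section H.
Context {R : realType} {X : metricType R}.
Local Notation d := (@mdist R X).

Lemma iter_cont (f : X -> X) n : continuous f -> continuous (iter n f).
Proof.
move=> fc; elim: n => [|n IH] x /=; first exact: cvg_id.
exact: (continuous_comp (IH x) (fc _)).
Qed.

Lemma dist_cont (F : X -> X) (c : X) : continuous F -> continuous (fun y => d (F y) c).
Proof.
move=> Fc y; apply/cvgrPdist_lt => e e0.
have H0 : \forall t \near y, d (F y) (F t) < e.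
  exact: (@metricType_numDomainType.cvgr_dist_lt _ _ _ (nbhs y) _ F (F y) (Fc y) _ e0).
near=> t; have H : d (F y) (F t) < e by near: t.
have h1 := metric_triangle (F y) (F t) c.
have h2 := metric_triangle (F t) (F y) c.
rewrite (metric_sym (F t) (F y)) in h2.
rewrite ltr_distlC; apply/andP; split; lra.
Unshelve. all: end_near. Qed.

Lemma step (f : X -> X) (L delta0 : R)
  (H : forall delta, 0 < delta -> delta <= delta0 -> forall xs,
       pseudo_orbit f delta xs -> exists x, shadowed_by f (L*delta) xs x)
  (k : nat) (xk y : X) :
  0 < d (iter k f y) xk -> d (iter k f y) xk <= delta0 ->
  exists y', (forall i, (i < k)%N -> d (iter i f y') (iter i f y) <= L * d (iter k f y) xk)
             /\ d (iter k f y') xk <= L * d (iter k f y) xk.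
Proof.
set t := d _ xk => t0 tle.
pose p i := if (i < k)%N then iter i f y else iter (i - k) f xk.
have [z Hz] : exists z, shadowed_by f (L*t) p z.
  apply: (H t t0 tle) => i; rewrite /p.
  case: (ltnP i.+1 k) => hi.
  - by rewrite (ltn_trans (ltnSn i) hi) /= mdistxx ltW.
  - case: (ltnP i k) => hi2.
    + have ek : k = i.+1 by lia.
      by rewrite /t ek subnn.
    + have -> : (i.+1 - k = (i - k).+1)%N by lia.
      by rewrite /= mdistxx ltW.
exists z; split.
- by move=> i ik; have := Hz i; rewrite /p ik.
- by have := Hz k; rewrite /p ltnn subnn.
Qed.

Lemma base (f : X -> X) (L delta0 : R)
  (H : forall delta, 0 < delta -> delta <= delta0 -> forall xs,
       pseudo_orbit f delta xs -> exists x, shadowed_by f (L*delta) xs x)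
  (delta : R) (xs : nat -> X) (k : nat) :
  0 < delta -> delta <= delta0 ->
  (forall i, (i < k)%N -> d (f (xs i)) (xs i.+1) <= delta) ->
  exists y, forall i, (i <= k)%N -> d (iter i f y) (xs i) <= L * delta.
Proof.
move=> d0 dle ch.
pose p i := if (i <= k)%N then xs i else iter (i - k) f (xs k).
have pk : forall i, (k <= i)%N -> p i = iter (i - k) f (xs k).
  move=> i ki; rewrite /p; case: leqP => // h.
  have ik : i = k by lia.
  by rewrite ik subnn.
have [z Hz] : exists z, shadowed_by f (L*delta) p z.
  apply: (H delta d0 dle) => i.
  case: (ltnP i k) => hi.
  - by rewrite /p (ltnW hi) hi; apply: ch.
  - rewrite pk // pk; last by lia.
    have -> : (i.+1 - k = (i - k).+1)%N by lia.
    by rewrite /= mdistxx ltW.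
exists z => i ik; have := Hz i; by rewrite /p ik.
Qed.
End H.

Theorem theorem1p1 (R : realType) (X : metricType R) (f : X -> X) :
  compact [set: X] -> continuous f ->
  contractive_shadowing f -> h_shadowing f.
Proof.
move=> cX fc [L [L0 L1 [d0 d00 H]]] eps e0.
set delta := Num.min d0 (eps * (1 - L)).
have dpos : 0 < delta by rewrite lt_min d00 mulr_gt0 // subr_gt0.
have dle0 : delta <= d0 by rewrite ge_min lexx.
have dle1 : delta <= eps * (1 - L) by rewrite ge_min lexx orbT.
exists delta => // xs k [k1 ch].
have [y1 Hy1] := @base _ _ f L d0 H delta xs k dpos dle0 ch.
pose g y := mdist (iter k f y) (xs k).
pose J := [set y | g y <= delta] `&` \bigcap_(i in [set i | (i < k)%N])
   [set y | (1-L) * mdist (iter i f y) (xs i) + L * g y <= L * delta].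
have gc : continuous g := dist_cont _ (xs k) (iter_cont f k fc).
have Jcl : closed J.
  apply: closedI.
    have := @preimage_closed _ _ g [set r | r <= delta] (fun x _ => gc x) (@closed_le _ delta).
    by [].
  apply: closed_bigI => i _.
  apply: (preimage_closed _ (@closed_le _ (L * delta))) => x _.
  apply: cvgD; apply: cvgM; (try exact: cvg_cst).
    exact: (dist_cont _ (xs i) (iter_cont f i fc)).
  exact: gc.
have Jc : compact J by apply: (subclosed_compact Jcl cX).
have LdL : L * delta <= delta by apply: ler_piMl; apply: ltW.
have J0 : J !=set0.
  exists y1; split.
    by rewrite /= /g; apply: le_trans (Hy1 k (leqnn k)) LdL.
  move=> i /= ik.
  have h1 := Hy1 i (ltnW ik).
  have h2 := Hy1 k (leqnn k).
  have h3 : (1 - L) * mdist (iter i f y1) (xs i) <= (1 - L) * (L * delta).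
    by apply: ler_wpM2l => //; rewrite subr_ge0 ltW.
  have h4 : L * g y1 <= L * (L * delta) by apply: ler_wpM2l => //; rewrite ltW.
  nra.
have [c cJ cmin] := compact_EVT_min J0 Jc (continuous_subspaceT gc).
move: (cJ); rewrite inE => -[gcd Jci].
have gc0 : 0 <= g c by apply: mdist_ge0.
case: (eqVneq (g c) 0) => [gc00 | gcn0].
  exists c; split; last exact: mdist_positivity gc00.
  move=> i ik; have := Jci i ik; rewrite /= gc00 mulr0 addr0 => hi.
  have : (1 - L) * mdist (iter i f c) (xs i) <= (1 - L) * eps.
    apply: le_trans hi _; apply: le_trans LdL _; by rewrite mulrC.
  by rewrite ler_pM2l // subr_gt0.
exfalso.
have gpos : 0 < g c by rewrite lt_neqAle eq_sym gcn0 gc0.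
have [y' [Hy'1 Hy'2]] := @step _ _ f L d0 H k (xs k) c gpos (le_trans gcd dle0).
have y'J : y' \in J.
  rewrite inE; split.
    rewrite /= /g; apply: le_trans Hy'2 _; apply: le_trans gcd.
    by apply: ler_piMl => //; apply: ltW.
  move=> i /= ik.
  have h1 := Hy'1 i ik.
  have h2 := Jci i ik; rewrite /= in h2.
  have h5 := metric_triangle (iter i f y') (iter i f c) (xs i).
  have h3 : (1 - L) * mdist (iter i f y') (xs i) <=
            (1 - L) * (L * g c + mdist (iter i f c) (xs i)).
    apply: ler_wpM2l; first by rewrite subr_ge0 ltW.
    by apply: le_trans h5 _; rewrite lerD2r.
  have h4 : L * g y' <= L * (L * g c) by apply: ler_wpM2l => //; rewrite ltW.
  nra.
have := cmin _ y'J.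
have : g y' <= L * g c by [].
have : L * g c < g c by rewrite gtr_pMl.
move=> a b e; have := le_lt_trans e (le_lt_trans b a); by rewrite ltxx.
Qed.
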